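(* Let $p=(p_1,\dots,p_n)\in[0,1]^n$ and $y=y_1\cdots y_m\in\{0,1\}^m$ with $n\ge m>0$, and let $i\in\{1,\dots,n\}$. Then $$\mathbf F(p,y)=\mathbf F(p_{[n]\setminus\{i\}},y)+p_i\sum_{k:\,y_k=1}\mathbf F(p_{[1:i-1]},y_{[1:k-1]})\,\mathbf F(p_{[i+1:n]},y_{[k+1:m]})+(1-p_i)\sum_{k:\,y_k=0}\mathbf F(p_{[1:i-1]},y_{[1:k-1]})\,\mathbf F(p_{[i+1:n]},y_{[k+1:m]}).$$
   Context: For integers $a,b$, $[a:b]=\{a,a+1,\dots,b\}$ if $b\ge a$ and $\emptyset$ otherwise; $[a]=[1:a]$. For a vector $p$ and index set $T$, $p_T$ is the subvector of $p$ with coordinates in $T$ (in increasing order), and similarly $y_T$ for sequences; $y_{[1:0]}$ and $y_{[m+1:m]}$ are the empty sequence. The relaxed binomial coefficient $\mathbf F:[0,1]^n\times\{0,1\}^m\to\mathbb R$ is defined by: if $1\le m\le n$, $\mathbf F(p,v)=\sum_{S\subseteq[n],|S|=m}\prod_{j=1}^m p_{S_j}^{v_j}(1-p_{S_j})^{1-v_j}$, where $S_1<\dots<S_m$ are the elements of $S$; if $m=0\le n$ (including $n=0$), $\mathbf F(p,v)=1$; otherwise ($m>n$) $\mathbf F(p,v)=0$. Equivalently $\mathbf F(p,v)$ is the expected number of occurrences of $v$ as a subsequence of a random $Z\in\{0,1\}^n$ with independent $Z_i\sim\mathrm{Bernoulli}(p_i)$. *)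

(* Defs.v *)
From mathcomp Require Import all_boot all_order all_algebra.
Set Implicit Arguments. Unset Strict Implicit. Unset Printing Implicit Defensive.
Import Order.TTheory GRing.Theory Num.Theory.
Local Open Scope ring_scope.

(* Vectors p in [0,1]^n are sequences of length n; words v in {0,1}^m are
   boolean sequences of length m.  Coordinates are 0-based in the seq
   (nth), i.e. p_j (1-based) = nth 0 p (j-1). *)

Definition bterm (R : pzRingType) (x : R) (v : bool) : R :=
  x ^+ (nat_of_bool v) * (1 - x) ^+ (1 - nat_of_bool v).

(* The relaxed binomial coefficient F(p,v).  For S : {set 'I_n}, enum S lists
   the elements of S in increasing order S_1 < ... < S_m. *)
Definition relaxed_binom (R : pzRingType) (p : seq R) (v : seq bool) : R :=
  let n := size p in
  let m := size v in
  if m == 0%N then 1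
  else if (m <= n)%N then
    \sum_(S : {set 'I_n} | #|S| == m)
      \prod_(j < m) bterm (nth 0 p (nth 0%N [seq val k | k <- enum S] j)) (nth false v j)
  else 0.

(* Main.v *)
Require Import Defs.
From mathcomp Require Import all_boot all_order all_algebra.
Set Implicit Arguments. Unset Strict Implicit. Unset Printing Implicit Defensive.
Import Order.TTheory GRing.Theory Num.Theory.
Lemma sorted_enumS n (S : {set 'I_n}) : sorted ltn [seq val k | k <- enum S].
Proof.
apply: (@subseq_sorted _ _ ltn_trans _ (iota 0 n)); last exact: iota_ltn_sorted.
rewrite -val_enum_ord; apply: map_subseq.
rewrite enumT /enum_mem; exact: filter_subseq.
Qed.

Lemma mem_enumS n (S : {set 'I_n}) j :
  (j \in [seq val k | k <- enum S]) = [exists k in S, val k == j].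
Proof.
apply/mapP/existsP => [[k]|[k /andP[kS /eqP<-]]].
  by rewrite mem_enum => kS ->; exists k; rewrite kS eqxx.
by exists k; rewrite ?mem_enum.
Qed.

Lemma enum_lift n (S : {set 'I_n}) :
  [seq val k | k <- enum ([set lift ord0 k | k in S] : {set 'I_n.+1})]
  = [seq (val k).+1 | k <- enum S].
Proof.
apply: (irr_sorted_eq ltn_trans ltnn (sorted_enumS _)).
  have -> : [seq (val k).+1 | k <- enum S] = map succn [seq val k | k <- enum S].
    by rewrite -map_comp.
  by apply: (homo_sorted (e := ltn)) ; last exact: sorted_enumS.
move=> j; rewrite mem_enumS.
apply/existsP/idP => [[k /andP[/imsetP[k' k'S ->] /eqP<-]]|].
  by apply/mapP; exists k'; rewrite ?mem_enum.
case/mapP => k; rewrite mem_enum => kS ->.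
by exists (lift ord0 k); rewrite imset_f //= eqxx.
Qed.

Lemma enum_lift0 n (S : {set 'I_n}) :
  [seq val k | k <- enum (ord0 |: [set lift ord0 k | k in S] : {set 'I_n.+1})]
  = 0%N :: [seq (val k).+1 | k <- enum S].
Proof.
apply: (irr_sorted_eq ltn_trans ltnn (sorted_enumS _)).
  rewrite /= path_sortedE; last exact: ltn_trans.
  apply/andP; split; first by apply/allP => x /mapP[k _ ->].
  have -> : [seq (val k).+1 | k <- enum S] = map succn [seq val k | k <- enum S].
    by rewrite -map_comp.
  by apply: (homo_sorted (e := ltn)) ; last exact: sorted_enumS.
move=> j; rewrite mem_enumS in_cons.
apply/existsP/idP => [[k /andP[]]|].
  rewrite in_setU1 => /orP[/eqP-> /eqP<- //|/imsetP[k' k'S ->] /eqP<-].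
  by apply/orP; right; apply/mapP; exists k'; rewrite ?mem_enum.
case/orP => [/eqP->|].
  by exists ord0; rewrite setU11.
case/mapP => k; rewrite mem_enum => kS ->.
by exists (lift ord0 k); rewrite setU1r ?imset_f //= eqxx.
Qed.
Local Open Scope ring_scope.

Definition RB (R : comPzRingType) (p : seq R) (v : seq bool) : R :=
  \sum_(S : {set 'I_(size p)} | #|S| == size v)
      \prod_(j < size v) bterm (nth 0 p (nth 0%N [seq val k | k <- enum S] j)) (nth false v j).

Lemma RB_nil_r (R : comPzRingType) (p : seq R) : RB p [::] = 1.
Proof.
rewrite /RB (big_pred1 set0); first by rewrite big_ord0.
by move=> S; rewrite /= cards_eq0.
Qed.

Lemma RB_nil_l (R : comPzRingType) b v : RB ([::] : seq R) (b :: v) = 0.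
Proof.
rewrite /RB big_pred0 // => S /=.
by have := max_card S; rewrite card_ord leqn0 => /eqP->.
Qed.

Lemma relaxed_RB (R : comPzRingType) (p : seq R) v : relaxed_binom p v = RB p v.
Proof.
rewrite /relaxed_binom; case: v => [|b v]; first by rewrite RB_nil_r.
rewrite /=; case: ifP => // hm.
rewrite /RB big_pred0 // => S /=.
apply/negbTE; apply: contraFN hm => /eqP <-.
by have := max_card S; rewrite card_ord.
Qed.

Lemma lift0_neq n (k : 'I_n) : (lift ord0 k == ord0) = false.
Proof. by apply/negbTE; rewrite eq_sym neq_lift. Qed.

Lemma ord0_notin n (S : {set 'I_n}) : (ord0 \in [set lift ord0 k | k in S]) = false.
Proof. by apply/negbTE/negP => /imsetP[k _ /eqP]; rewrite eq_sym lift0_neq. Qed.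

Lemma RB_cons (R : comPzRingType) (x : R) p b v :
  RB (x :: p) (b :: v) = RB p (b :: v) + bterm x b * RB p v.
Proof.
rewrite /RB (bigID (fun S : {set 'I_(size p).+1} => ord0 \in S)) /= addrC.
congr (_ + _).
  rewrite (reindex_onto (fun S : {set 'I_(size p)} => [set lift ord0 k | k in S])
     (fun S : {set 'I_(size p).+1} => [set k | lift ord0 k \in S])) /=.
    apply: eq_big => [S|S /andP[/andP[hS _] _]].
      rewrite card_imset; last exact: lift_inj.
      rewrite ord0_notin.
      have -> : [set k | lift ord0 k \in [set lift ord0 k0 | k0 in S]] == S.
        by apply/eqP/setP => k; rewrite inE mem_imset //; exact: lift_inj.
      by case: (#|S| == _).
    rewrite card_imset in hS; last exact: lift_inj.
    rewrite enum_lift; apply: eq_bigr => j _.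
    have hj : (j < size [seq val k | k <- enum S])%N.
      by rewrite size_map -cardE (eqP hS).
    have -> : [seq (val k).+1 | k <- enum S] = map succn [seq val k | k <- enum S].
      by rewrite -map_comp.
    by rewrite (nth_map 0%N).
  move=> S /andP[_ hS]; apply/setP => k.
  case: (unliftP ord0 k) => [k'|] ->.
    apply/imsetP/idP => [[k'' ]|h]; first by rewrite inE => h /lift_inj ->.
    by exists k'; rewrite ?inE.
  by rewrite (negbTE hS) ord0_notin.
rewrite (reindex_onto (fun S : {set 'I_(size p)} => ord0 |: [set lift ord0 k | k in S])
     (fun S : {set 'I_(size p).+1} => [set k | lift ord0 k \in S])) /=.
  rewrite big_distrr /=.
  apply: eq_big => [S|S /andP[/andP[hS _] _]].
    rewrite cardsU1 card_imset; last exact: lift_inj.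
    rewrite ord0_notin setU11 /= add1n eqSS.
    have -> : [set k | lift ord0 k \in ord0 |: [set lift ord0 k0 | k0 in S]] == S.
      apply/eqP/setP => k; rewrite inE in_setU1 mem_imset; last exact: lift_inj.
      by rewrite lift0_neq.
    by case: (#|S| == _).
  rewrite cardsU1 card_imset in hS; last exact: lift_inj.
  rewrite ord0_notin /= add1n eqSS in hS.
  rewrite enum_lift0 big_ord_recl /=; congr (_ * _).
  apply: eq_bigr => j _.
  have hj : (j < size [seq val k | k <- enum S])%N.
    by rewrite size_map -cardE (eqP hS).
  have -> : [seq (val k).+1 | k <- enum S] = map succn [seq val k | k <- enum S].
    by rewrite -map_comp.
  by rewrite /= (nth_map 0%N).
move=> S /andP[_ hS]; apply/setP => k.
rewrite in_setU1.
case: (unliftP ord0 k) => [k'|] ->.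
  rewrite lift0_neq /=.
  apply/imsetP/idP => [[k'' ]|h]; first by rewrite inE => h /lift_inj ->.
  by exists k'; rewrite ?inE.
by rewrite eqxx hS.
Qed.

Lemma takeS T (b : T) v k : take k.+1 (b :: v) = b :: take k v. Proof. by []. Qed.
Lemma dropS T (b : T) v k : drop k.+1 (b :: v) = drop k v. Proof. by []. Qed.
Lemma nthS T (d b : T) v k : nth d (b :: v) k.+1 = nth d v k. Proof. by []. Qed.

Lemma RB_split (R : comPzRingType) (p1 p2 : seq R) x y :
  RB (p1 ++ x :: p2) y = RB (p1 ++ p2) y +
    \sum_(k < size y) RB p1 (take k y) * bterm x (nth false y k) * RB p2 (drop k.+1 y).
Proof.
elim: p1 y => [|a q IH] [|b v].
- by rewrite !RB_nil_r big_ord0 addr0.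
- rewrite /= RB_cons big_ord_recl /= RB_nil_r mul1r drop0.
  rewrite big1 ?addr0 // => k _.
  by rewrite ?lift0 /= RB_nil_l !mul0r.
- by rewrite !cat_cons !RB_nil_r big_ord0 addr0.
rewrite !cat_cons !RB_cons !IH.
have E1 : \sum_(k < size (b :: v)) RB (a :: q) (take k (b :: v)) * bterm x (nth false (b :: v) k)
      * RB p2 (drop k.+1 (b :: v)) =
    \sum_(k < size (b :: v)) RB q (take k (b :: v)) * bterm x (nth false (b :: v) k)
      * RB p2 (drop k.+1 (b :: v)) +
    bterm a b * \sum_(k < size v) RB q (take k v) * bterm x (nth false v k) * RB p2 (drop k.+1 v).
  rewrite !big_ord_recl !take0 !RB_nil_r -addrA; congr (_ + _).
  rewrite big_distrr -big_split; apply: eq_bigr => k _.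
  rewrite lift0 !takeS !nthS !dropS RB_cons.
  by rewrite /= !mulrDl !mulrA.
rewrite E1 mulrDr -!addrA; congr (_ + _).
by rewrite addrCA.
Qed.

Unset Implicit Arguments.
Theorem lemma1 (R : realFieldType) (p : seq R) (y : seq bool) (i : nat) :
  (forall j, (j < size p)%N -> 0 <= nth 0 p j <= 1) ->
  (0 < size y)%N -> (size y <= size p)%N ->
  (1 <= i <= size p)%N ->
  relaxed_binom p y =
    relaxed_binom (take i.-1 p ++ drop i p) y
    + nth 0 p i.-1 *
        \sum_(1 <= k < (size y).+1 | nth false y k.-1)
           relaxed_binom (take i.-1 p) (take k.-1 y)
           * relaxed_binom (drop i p) (drop k y)
    + (1 - nth 0 p i.-1) *
        \sum_(1 <= k < (size y).+1 | ~~ nth false y k.-1)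
           relaxed_binom (take i.-1 p) (take k.-1 y)
           * relaxed_binom (drop i p) (drop k y).
Proof.
move=> _ _ _ /andP[i1 ip].
rewrite !relaxed_RB.
under eq_bigr => k _ do rewrite !relaxed_RB.
under [X in _ = _ + _ + _ * X]eq_bigr => k _ do rewrite !relaxed_RB.
have hi : (i.-1 < size p)%N by rewrite prednK.
have hp : p = take i.-1 p ++ nth 0 p i.-1 :: drop i p.
  by rewrite -{1}(cat_take_drop i.-1 p) (drop_nth 0) // prednK.
rewrite {1}hp RB_split -addrA; congr (_ + _).
rewrite !big_add1 /= !big_mkord.
rewrite (bigID (fun k : 'I_(size y) => nth false y k)) /=; congr (_ + _).
  rewrite big_distrr; apply: eq_bigr => k hk.
  by rewrite /bterm hk /= expr1 expr0 mulr1 mulrAC mulrC.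
rewrite big_distrr; apply: eq_bigr => k hk.
by rewrite /bterm (negbTE hk) /= expr1 expr0 mul1r mulrAC mulrC.
Qed.
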